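(* There are infinitely many pairwise non-isomorphic minimal non-matching tournaments.
   Context: A tournament is a finite, non-null, loopless directed graph in which for any two distinct vertices $u,v$ there is exactly one edge with both ends in $\{u,v\}$. Given an ordering $v_1,\dots,v_n$ of its vertices, a backedge is an edge from $v_j$ to $v_i$ with $j>i$; the ordering is a matching ordering if every vertex is the head or tail of at most one backedge. A matching tournament is a tournament having at least one matching ordering. A tournament $G$ is minimal non-matching if $G$ is not a matching tournament but every subtournament (induced on a nonempty proper subset of vertices) is a matching tournament. *)

(* Defs.v *)
From mathcomp Require Import all_boot.
Set Implicit Arguments. Unset Strict Implicit. Unset Printing Implicit Defensive.

(* A directed graph on a finite vertex type T is given by its edge relation
   e : rel T (e u v = there is an edge from u to v).  Since tournaments have
   at most one edge between any pair, no multi-edges need to be represented. *)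

Definition is_tournament_on (T : finType) (e : rel T) (S : {set T}) : Prop :=
  S != set0 /\
  (forall u, u \in S -> ~~ e u u) /\
  (forall u v, u \in S -> v \in S -> u != v -> (e u v (+) e v u)).

Definition is_tournament (T : finType) (e : rel T) : Prop :=
  is_tournament_on e [set: T].

Definition is_ordering (T : finType) (S : {set T}) (s : seq T) : Prop :=
  uniq s /\ (forall x, (x \in s) = (x \in S)).

Definition backedge (T : finType) (e : rel T) (s : seq T) (u v : T) : bool :=
  e u v && (index v s < index u s).

Definition matching_ordering (T : finType) (e : rel T) (S : {set T}) (s : seq T) : Prop :=
  is_ordering S s /\
  forall x, x \in S ->
    #|[set y in S | backedge e s x y || backedge e s y x]| <= 1.

Definition matching_on (T : finType) (e : rel T) (S : {set T}) : Prop :=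
  exists s : seq T, matching_ordering e S s.

Definition matching_tournament (T : finType) (e : rel T) : Prop :=
  is_tournament e /\ matching_on e [set: T].

Definition minimal_non_matching (T : finType) (e : rel T) : Prop :=
  is_tournament e /\
  ~ matching_on e [set: T] /\
  (forall S : {set T}, S != set0 -> S \proper [set: T] -> matching_on e S).

Definition digraph := {n : nat & rel 'I_n}.

Definition isomorphic (G H : digraph) : Prop :=
  exists f : 'I_(projT1 G) -> 'I_(projT1 H),
    bijective f /\ forall u v, projT2 H (f u) (f v) = projT2 G u v.

(* Main.v *)
Require Import Defs.
From Stdlib Require Import Lia ZifyBool ZifyNat Arith.
From Corelib Require Import ssreflect ssrbool ssrfun.

(* Vertices 0 .. 2m+4, natural order, reversed ("back") arcs:
   4 -> 0,  y+3 -> y for odd y in [3, 2m+1],  and 2m+3 -> 2m+1. *)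
Definition nb (m x y : nat) : bool :=
  ((x =? 4) && (y =? 0)) || ((y mod 2 =? 1) && (3 <=? y) && (y <=? 2*m+1) && (x =? y+3))
  || ((x =? 2*m+3) && (y =? 2*m+1)).
Definition E (m x y : nat) : bool := nb m x y || ((x <? y) && negb (nb m y x)).
Definition key (m v x : nat) : nat := if x =? 0 then (if (v =? 1) || (v =? 2) then 9 else 0) else
  if (x mod 2 =? 1) && (3 <=? x) && (x <=? 2*m+1) && (v <=? x+1) then 2*x+7 else 2*x.
Definition P (m v x y : nat) : bool :=
  (E m x y && (key m v y <? key m v x)) || (E m y x && (key m v x <? key m v y)).
Definition q (m v x : nat) : nat :=
  if x =? 0 then (if v =? 1 then 2 else if v =? 2 then 1 else 4) else
  if x <=? 2 then 0 else
  if x =? 4 then (if v <=? 2 then 3 else 0) else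
  if 2*m+3 <=? x then 2*m+1 else
  if x mod 2 =? 1 then (if v <=? x+1 then x+1 else if (x =? 2*m+1) && (v =? 2*m+4) then 2*m+3 else x+3)
  else (if v <? x-1 then x-1 else x-3).

Lemma nb_spec m x y : nb m x y = true ->
  (x = 4 /\ y = 0) \/ (y mod 2 = 1 /\ 3 <= y /\ y <= 2*m+1 /\ x = y+3) \/ (x = 2*m+3 /\ y = 2*m+1).
Proof. rewrite /nb; lia. Qed.

Lemma inv_spec m v x y : 1 <= m -> x < y -> key m v y < key m v x ->
  (x = 0 /\ (v = 1 \/ v = 2) /\ (y = 1 \/ y = 2 \/ y = 4)) \/
  (x mod 2 = 1 /\ 3 <= x /\ x <= 2*m+1 /\ v <= x+1 /\ (y = x+1 \/ (y = x+2 /\ x = 2*m+1) \/ y = x+3)).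
Proof. rewrite /key; repeat (case: ifP => ?); unfold is_true in *; lia. Qed.

Ltac fin := repeat match goal with |- context [if ?b then _ else _] => let H := fresh "H" in destruct b eqn:H end; lia.

Lemma P_q (m v x y : nat) : 1 <= m -> v < 2*m+5 -> x < 2*m+5 -> y < 2*m+5 -> x <> v -> y <> v ->
  P m v x y = true -> y = q m v x.
Proof.
move=> hm hv hx hy hxv hyv.
rewrite /P /E => /orP[/andP[/orP[Hn | /andP[Hlt Hnn]] Hk] | /andP[/orP[Hn | /andP[Hlt Hnn]] Hk]];
  move/Nat.ltb_lt: Hk => Hk.
- case: (nb_spec m x y Hn) => [[e1 e2]|[[h1 [h2 [h3 e1]]]|[e1 e2]]]; subst; clear Hn;
  move: Hk; rewrite /key /q; fin.
- move/Nat.ltb_lt: Hlt => Hlt.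
  case: (inv_spec m v x y hm Hlt Hk) => [[e1 [hv' [e2 | [e2 | e2]]]]|[h1 [h2 [h3 [h4 [e2 | [[e2 h5] | e2]]]]]]]; subst.
  + clear Hnn; move: Hk; rewrite /key /q; fin.
  + clear Hnn; move: Hk; rewrite /key /q; fin.
  + by move: Hnn; rewrite /nb.
  + clear Hnn; move: Hk; rewrite /key /q; fin.
  + move: Hnn; rewrite /nb /is_true; lia.
  + move: Hnn; rewrite /nb /is_true; lia.
- case: (nb_spec m y x Hn) => [[e1 e2]|[[h1 [h2 [h3 e1]]]|[e1 e2]]]; subst; clear Hn;
  move: Hk; rewrite /key /q; fin.
- move/Nat.ltb_lt: Hlt => Hlt.
  case: (inv_spec m v y x hm Hlt Hk) => [[e1 [hv' [e2 | [e2 | e2]]]]|[h1 [h2 [h3 [h4 [e2 | [[e2 h5] | e2]]]]]]]; subst.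
  + clear Hnn; move: Hk; rewrite /key /q; fin.
  + clear Hnn; move: Hk; rewrite /key /q; fin.
  + by move: Hnn; rewrite /nb.
  + clear Hnn; move: Hk; rewrite /key /q; fin.
  + move: Hnn; rewrite /nb /is_true; lia.
  + move: Hnn; rewrite /nb /is_true; lia.
Qed.

Lemma key_inj (m v x y : nat) : key m v x = key m v y -> x = y.
Proof.
rewrite /key.
repeat (case: ifP => ?); unfold is_true in *; lia.
Qed.


Lemma nb_lt m x y : nb m x y = true -> y < x.
Proof. rewrite /nb; lia. Qed.

Lemma E_irr m x : E m x x = false.
Proof. rewrite /E /nb; lia. Qed.

Lemma E_tot m x y : x <> y -> xorb (E m x y) (E m y x) = true.
Proof.
move=> nxy; rewrite /E.
have l1 := nb_lt m x y; have l2 := nb_lt m y x.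
destruct (nb m x y) eqn:Hxy; destruct (nb m y x) eqn:Hyx;
  destruct (Nat.ltb x y) eqn:h1; destruct (Nat.ltb y x) eqn:h2; simpl; try reflexivity;
  try (have := l1 erefl; have := l2 erefl; lia); lia.
Qed.

Lemma E_step0 m k : 1 <= m -> 0 < k < 4 -> (E m 0 k && E m k 4 && E m 4 0) = true.
Proof. rewrite /E /nb; lia. Qed.

Lemma E_chain m t : S t <= m ->
  (E m (2*t+3) (2*t+4) && E m (2*t+4) (2*t+6) && E m (2*t+6) (2*t+3)) = true.
Proof. rewrite /E /nb; lia. Qed.

Lemma E_final m : 1 <= m ->
  (E m (2*m+1) (2*m+2) && E m (2*m+2) (2*m+3) && E m (2*m+3) (2*m+1)) = true.
Proof. rewrite /E /nb; lia. Qed.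

Definition N (m : nat) := S (2*m+4).

Lemma N_eq m : N m = 2*m+5.
Proof. rewrite /N; lia. Qed.

Lemma N_lt m a : a < N m -> a < 2*m+5.
Proof. rewrite /N; lia. Qed.

Lemma lt_N m a : a < 2*m+5 -> a < N m.
Proof. rewrite /N; lia. Qed.

Lemma N_inj i j : N (S i) = N (S j) -> i = j.
Proof. rewrite /N; lia. Qed.

Lemma forcing m (cov : nat -> nat -> bool) : 1 <= m ->
  (forall a b, cov a b = cov b a) ->
  (forall a b c, a < 2*m+5 -> b < 2*m+5 -> c < 2*m+5 -> cov a b = true -> cov a c = true -> b = c) ->
  (forall a b c, a < 2*m+5 -> b < 2*m+5 -> c < 2*m+5 -> a <> b ->
    E m a b = true -> E m b c = true -> E m c a = true -> (cov a b || cov b c || cov c a) = true) -> False.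
Proof.
move=> m1 covC uq tri.
have c40 : cov 4 0 = true.
  case n40: (cov 4 0) => //.
  have h k : 0 < k < 4 -> (cov 0 k || cov 4 k) = true.
    move=> hk; have := E_step0 m k m1 hk; move=> /andP[/andP[a b] c].
    move: (tri 0 k 4 ltac:(lia) ltac:(lia) ltac:(lia) ltac:(lia) a b c).
    by rewrite (covC k 4) n40 orbF.
  have h1 := h 1 ltac:(lia); have h2 := h 2 ltac:(lia); have h3 := h 3 ltac:(lia).
  case/orP: h1 => h1; case/orP: h2 => h2.
  - by have := uq 0 1 2 ltac:(lia) ltac:(lia) ltac:(lia) h1 h2.
  - case/orP: h3 => h3.
    + by have := uq 0 1 3 ltac:(lia) ltac:(lia) ltac:(lia) h1 h3.
    + by have := uq 4 2 3 ltac:(lia) ltac:(lia) ltac:(lia) h2 h3.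
  - case/orP: h3 => h3.
    + by have := uq 0 2 3 ltac:(lia) ltac:(lia) ltac:(lia) h2 h3.
    + by have := uq 4 1 3 ltac:(lia) ltac:(lia) ltac:(lia) h1 h3.
  - by have := uq 4 1 2 ltac:(lia) ltac:(lia) ltac:(lia) h1 h2.
pose p t := if t =? 0 then 0 else 2*t+1.
have hp t : (p t = 0 /\ t = 0) \/ (p t = 2*t+1 /\ 0 < t).
  by rewrite /p; case: ifP => h; unfold is_true in *; [left | right]; lia.
have chain t : t <= m -> cov (2*t+4) (p t) = true.
  elim: t => [|t IH] ht; first by [].
  have IH' := IH ltac:(lia).
  have hpt := hp t; have hpt1 := hp (S t).
  have hptb : p t < 2*m+5 by lia.
  have := E_chain m t ht; move=> /andP[/andP[a b] c].
  have e1 : 2 * S t + 4 = 2*t+6 by lia.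
  have e2 : p (S t) = 2*t+3 by lia.
  rewrite e1 e2.
  case/orP: (tri (2*t+3) (2*t+4) (2*t+6) ltac:(lia) ltac:(lia) ltac:(lia) ltac:(lia) a b c) => [/orP[] hc|hc].
  - rewrite covC in hc; have := uq (2*t+4) (2*t+3) (p t) ltac:(lia) ltac:(lia) hptb hc IH'.
    lia.
  - have := uq (2*t+4) (2*t+6) (p t) ltac:(lia) ltac:(lia) hptb hc IH'.
    lia.
  - exact: hc.
have cm := chain m (le_n m).
have cm1 := chain (m-1) ltac:(lia).
have hm1 : 2 * (m-1) + 4 = 2*m+2 by lia.
rewrite hm1 in cm1.
have hpm := hp m; have hpm1 := hp (m-1).
have hpm' : p m = 2*m+1 by lia.
rewrite hpm' covC in cm.
have hpm1b : p (m-1) < 2*m+5 by lia.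
have := E_final m m1; move=> /andP[/andP[a b] c].
case/orP: (tri (2*m+1) (2*m+2) (2*m+3) ltac:(lia) ltac:(lia) ltac:(lia) ltac:(lia) a b c) => [/orP[] hc|hc].
- by have := uq (2*m+1) (2*m+2) (2*m+4) ltac:(lia) ltac:(lia) ltac:(lia) hc cm; lia.
- have := uq (2*m+2) (2*m+3) (p (m-1)) ltac:(lia) ltac:(lia) hpm1b hc cm1.
  lia.
- by rewrite covC in hc; have := uq (2*m+1) (2*m+3) (2*m+4) ltac:(lia) ltac:(lia) ltac:(lia) hc cm; lia.
Qed.

From mathcomp Require Import all_boot.

Lemma ltn_ltb (a b : nat) : (a < b)%N = Nat.ltb a b.
Proof.
apply/idP/idP => h.
  by apply/Nat.ltb_lt/ltP.
by apply/ltP/Nat.ltb_lt.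
Qed.

Lemma key_ordering (T : finType) (S : {set T}) (k : T -> nat) : injective k ->
  exists s : seq T, is_ordering S s /\
    {in S &, forall x y, (index x s < index y s) = (k x < k y)}.
Proof.
move=> kinj.
pose le := fun x y : T => k x <= k y.
have le_tr : transitive le by move=> a b c; rewrite /le; exact: leq_trans.
have le_tot : total le by move=> a b; rewrite /le leq_total.
exists (sort le (enum S)); split.
  split; first by rewrite sort_uniq enum_uniq.
  by move=> x; rewrite mem_sort mem_enum.
have Hs := sort_sorted le_tot (enum S).
move=> x y xS yS.
have xs : x \in sort le (enum S) by rewrite mem_sort mem_enum.
have ys : y \in sort le (enum S) by rewrite mem_sort mem_enum.
apply/idP/idP => H.
  have := sorted_ltn_index le_tr Hs x y xs ys H.
  rewrite /le leq_eqVlt => /orP[/eqP/kinj exy|//].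
  by subst; rewrite ltnn in H.
rewrite ltnNge; apply/negP => H2; rewrite leq_eqVlt in H2.
case/orP: H2 => [/eqP H2 | H2].
  have := congr1 (nth x (sort le (enum S))) H2; rewrite !nth_index // => exy.
  by subst; rewrite ltnn in H.
have := sorted_ltn_index le_tr Hs y x ys xs H2.
by rewrite /le leqNgt H.
Qed.

Lemma matching_key (T : finType) (e : rel T) (S : {set T}) (k : T -> nat) : injective k ->
  (forall x y z, x \in S -> y \in S -> z \in S ->
     (e x y && (k y < k x)) || (e y x && (k x < k y)) ->
     (e x z && (k z < k x)) || (e z x && (k x < k z)) -> y = z) ->
  matching_on e S.
Proof.
move=> kinj H; have [s [Hs Hidx]] := @key_ordering _ S k kinj.
exists s; split => // x xS.
apply/card_le1_eqP => y z; rewrite !inE /backedge => /andP[yS Hy] /andP[zS Hz].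
move: Hy Hz; rewrite (Hidx y x) // (Hidx x y) // (Hidx z x) // (Hidx x z) // => Hy Hz.
exact: (H x).
Qed.

Lemma tri_back (T : finType) (e : rel T) (s : seq T) (x y z : T) :
  x \in s -> y \in s -> z \in s -> x != y ->
  e x y -> e y z -> e z x ->
  [|| backedge e s x y, backedge e s y z | backedge e s z x].
Proof.
move=> xs ys zs nxy exy eyz ezx; rewrite /backedge exy eyz ezx /=.
apply/negPn/negP; rewrite !negb_or -!leqNgt => /and3P[h1 h2 h3].
have hxy : index x s = index y s by apply/eqP; rewrite eqn_leq h1 (leq_trans h2 h3).
have := congr1 (nth x s) hxy; rewrite !nth_index // => exy'.
by rewrite exy' eqxx in nxy.
Qed.

Definition G (m : nat) : rel 'I_(N m) := fun x y => E m x y.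

Lemma G_tournament m : is_tournament (G m).
Proof.
split; first by apply/set0Pn; exists ord0; rewrite inE.
split.
  by move=> u _; rewrite /G E_irr.
move=> u v _ _ nuv; rewrite /G.
have h : (val u) <> (val v) by move=> h; move/eqP: nuv; apply; exact: val_inj.
by move: (E_tot m u v h); case: (E m u v); case: (E m v u).
Qed.


Lemma G_not_matching m : (1 <= m)%coq_nat -> ~ matching_on (G m) [set: 'I_(N m)].
Proof.
move=> m1 [s [[Hu Hmem] Hm]].
pose w (a : nat) : 'I_(N m) := inord a.
have wK a : (a < N m)%coq_nat -> val (w a) = a.
  by move=> /ltP h; exact: inordK.
pose cov a b := backedge (G m) s (w a) (w b) || backedge (G m) s (w b) (w a).
apply: (@forcing m cov m1).
- by move=> a b; rewrite /cov orbC.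
- move=> a b c ha hb hc hab hac.
  have := Hm (w a) (in_setT _); move/card_le1_eqP => /(_ (w b) (w c)).
  rewrite !inE /=.
  move=> /(_ hab hac) /(congr1 val).
  by rewrite !wK //; apply: lt_N.
- move=> a b c ha hb hc nab eab ebc eca.
  have ins x : w x \in s by rewrite Hmem in_setT.
  have nw : w a != w b.
    by apply/negP => /eqP /(congr1 val); rewrite !wK //; apply: lt_N.
  have := @tri_back _ (G m) s (w a) (w b) (w c) (ins a) (ins b) (ins c) nw.
  rewrite /G !wK; try apply: lt_N => //.
  move=> /(_ eab ebc eca).
  by rewrite /cov; case/or3P => ->; rewrite ?orbT.
Qed.

Lemma G_minimal m : (1 <= m)%coq_nat -> forall S : {set 'I_(N m)}, S != set0 -> S \proper [set: 'I_(N m)] ->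
  matching_on (G m) S.
Proof.
move=> m1 S _ /properP[_ [v0 _ v0S]].
apply: (@matching_key _ _ _ (fun x : 'I_(N m) => key m v0 x)).
  by move=> x y /key_inj /val_inj.
move=> x y z xS yS zS Hy Hz.
have nv a : a \in S -> (val a) <> (val v0).
  by move=> aS /val_inj ea; rewrite -ea aS in v0S.
have hP a : a \in S -> ((G m x a && (key m v0 a < key m v0 x)) || (G m a x && (key m v0 x < key m v0 a))) ->
   val a = q m v0 x.
  have ord_lt (b : 'I_(N m)) := N_lt m b (ltP (ltn_ord b)).
  move=> aS; rewrite !ltn_ltb => h.
  exact: (@P_q m v0 x a m1 (ord_lt v0) (ord_lt x) (ord_lt a) (nv x xS) (nv a aS) h).
apply: val_inj; exact: (etrans (hP y yS Hy) (esym (hP z zS Hz))).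
Qed.

Definition Fam (i : nat) : digraph := existT (fun n => rel 'I_n) (N i.+1) (G i.+1).

Theorem theorem5p9 :
  exists F : nat -> digraph,
    (forall i, minimal_non_matching (projT2 (F i))) /\
    (forall i j, i <> j -> ~ isomorphic (F i) (F j)).
Proof.
have m1 i : (1 <= i.+1)%coq_nat by apply/leP.
exists Fam; split.
  move=> i; split; first exact: G_tournament.
  split; first exact: G_not_matching (m1 i).
  exact: G_minimal (m1 i).
move=> i j nij [f [fbij _]].
have := bij_eq_card fbij; rewrite !card_ord /= => /N_inj.
exact: nij.
Qed.
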